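(* Consider the following random bipartite graph $G$ on $L\cup R$ with $|L|=|R|=n$ (with $n$ divisible by $6$): $L=L_1\cup L_2$, $R=R_1\cup R_2$ with $|L_1|=|R_1|=n/6$ and $|L_2|=|R_2|=5n/6$; every vertex of $L$ is adjacent to every vertex of $R_1$, every vertex of $R$ is adjacent to every vertex of $L_1$, and in addition a uniformly random perfect matching $M$ between $L_2$ and $R_2$ is added; each vertex's adjacency list is a uniformly random permutation of its neighbors. Any deterministic algorithm that accesses $G$ via neighbor queries and pair queries (and knows all degrees and the partition $L_1,L_2,R_1,R_2$) requires $\Omega(n^2)$ queries in expectation to discover $n/3$ edges of $M$.
   Context: A neighbor query $Q_1(u,i)$ returns the $i$-th entry of $u$'s adjacency list; a pair query $Q_2(u,v)$ returns whether $(u,v)$ is an edge. An edge $(u,v)\in M$ is discovered once the answers to the queries made so far uniquely identify $(u,v)$ as an edge of $M$. *)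

(* Defs.v *)
From mathcomp Require Import all_boot.
Set Implicit Arguments. Unset Strict Implicit. Unset Printing Implicit Defensive.

(* n = 6*k.  L and R are both indexed by 'I_(6*k);
   L1 = {u | u < k}, L2 = {u | k <= u}; same for R1, R2. *)

Definition vtx (k : nat) := 'I_(6 * k).

(* The matching M is encoded by m : L -> R (m u = M(u) for u in L2; m u = u,
   junk, for u in L1).  An adjacency list is a function from positions to
   option vertices: Some v at positions < degree, None beyond. *)
Definition alist (k : nat) := {ffun vtx k -> option (vtx k)}.
Definition inst (k : nat) :=
  ({ffun vtx k -> vtx k} * {ffun vtx k -> alist k} * {ffun vtx k -> alist k})%type.

Definition imatch k (I : inst k) := I.1.1.
Definition iadjL k (I : inst k) := I.1.2.
Definition iadjR k (I : inst k) := I.2.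

Definition gedge k (m : {ffun vtx k -> vtx k}) (u v : vtx k) : bool :=
  [|| u < k, v < k | m u == v].

Definition listOK k (nb : pred (vtx k)) (f : alist k) : bool :=
  [forall i : vtx k,
     if i < #|nb| then (if f i is Some v then nb v else false) else f i == None]
  && [forall i : vtx k, forall j : vtx k,
        [&& i < #|nb|, j < #|nb| & f i == f j] ==> (i == j)].

Definition valid k (I : inst k) : bool :=
  let m := imatch I in
  [&& [forall u : vtx k, (u < k) ==> (m u == u)],
      injectiveb m,
      [forall u : vtx k, listOK (fun v => gedge m u v) (iadjL I u)] &
      [forall v : vtx k, listOK (fun u => gedge m u v) (iadjR I v)]].

(* Queries: inl (true, u, i) = Q1(u,i) for u in L; inl (false, v, i) = Q1(v,i)
   for v in R; inr (u, v) = Q2(u,v) with u in L, v in R. *)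
Definition query k := ((bool * vtx k * vtx k) + (vtx k * vtx k))%type.
Definition answer k := (option (vtx k) + bool)%type.

Definition ans k (I : inst k) (q : query k) : answer k :=
  match q with
  | inl (s, u, i) => inl (if s then iadjL I u i else iadjR I u i)
  | inr (u, v) => inr (gedge (imatch I) u v)
  end.

Definition strategy k := seq (query k * answer k) -> query k.

Fixpoint hist k (A : strategy k) (I : inst k) (t : nat) : seq (query k * answer k) :=
  match t with
  | 0 => [::]
  | t'.+1 => let h := hist A I t' in let q := A h in rcons h (q, ans I q)
  end.

Definition consistent k (I : inst k) (h : seq (query k * answer k)) : bool :=
  all (fun qa => ans I qa.1 == qa.2) h.

Definition discovered k (h : seq (query k * answer k)) (u v : vtx k) : bool :=
  [forall I : inst k, (valid I && consistent I h) ==> ((k <= u) && (imatch I u == v))].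

Definition ndisc k (h : seq (query k * answer k)) : nat :=
  #|[set u : vtx k | [exists v : vtx k, discovered h u v]]|.

(* min(number of queries until n/3 = 2k edges of M are discovered, T) *)
Definition costT k (A : strategy k) (I : inst k) (T : nat) : nat :=
  find (fun t => 2 * k <= ndisc (hist A I t)) (iota 0 T).

(* Main.v *)
Require Import Defs.
From mathcomp Require Import all_boot.
From mathcomp Require Import zify.
Set Implicit Arguments. Unset Strict Implicit. Unset Printing Implicit Defensive.



Section Basics.
Variable k : nat.
Local Notation V := (vtx k).

Definition swapf (a b z : V) : V := if z == a then b else if z == b then a else z.

Lemma swapfK a b : involutive (swapf a b).
Proof.
move=> z; rewrite /swapf.
case: (eqVneq z a) => [->|za].
  by case: (eqVneq b a) => [->|ba]; rewrite ?eqxx.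
case: (eqVneq z b) => [->|zb]; first by rewrite eqxx.
by rewrite (negbTE za) (negbTE zb).
Qed.

Lemma swapf_inj a b : injective (swapf a b).
Proof. exact: inv_inj (swapfK a b). Qed.

Lemma swapfC a b : swapf a b =1 swapf b a.
Proof.
move=> z; rewrite /swapf; case: (eqVneq z a) => [za|za]; case: (eqVneq z b) => [zb|zb] //.
by rewrite -za -zb.
Qed.

Lemma swapf_l a b : swapf a b a = b. Proof. by rewrite /swapf eqxx. Qed.
Lemma swapf_r a b : swapf a b b = a.
Proof. by rewrite /swapf eqxx; case: eqP. Qed.
Lemma swapf_id a b z : z != a -> z != b -> swapf a b z = z.
Proof. by rewrite /swapf => /negbTE -> /negbTE ->. Qed.

Lemma lok_some (nb : pred V) (f : alist k) (i v : V) : listOK nb f -> f i = Some v -> nb v.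
Proof.
case/andP=> /forallP /(_ i) H _ Hf; move: H; rewrite Hf.
by case: ifP.
Qed.

Lemma lok_lt (nb : pred V) (f : alist k) (i v : V) : listOK nb f -> f i = Some v -> i < #|nb|.
Proof.
case/andP=> /forallP /(_ i) H _ Hf; move: H; rewrite Hf.
by case: ifP.
Qed.

Lemma lok_none (nb : pred V) (f : alist k) (i : V) : listOK nb f -> ~~ (i < #|nb|) -> f i = None.
Proof.
case/andP=> /forallP /(_ i) H _ Hi; move: H; rewrite (negbTE Hi).
by move/eqP.
Qed.

Lemma lok_ex (nb : pred V) (f : alist k) (i : V) : listOK nb f -> i < #|nb| -> exists v, f i = Some v /\ nb v.
Proof.
case/andP=> /forallP /(_ i) H _ Hi; move: H; rewrite Hi.
by case: (f i) => // v Hv; exists v.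
Qed.

Lemma lok_inj (nb : pred V) (f : alist k) (i j : V) : listOK nb f -> i < #|nb| -> j < #|nb| -> f i = f j -> i = j.
Proof.
case/andP=> _ /forallP /(_ i) /forallP /(_ j) H Hi Hj Hf.
by move: H; rewrite Hi Hj Hf eqxx /= => /eqP.
Qed.

Lemma lok_inj_some (nb : pred V) (f : alist k) (i j : V) : listOK nb f -> f i != None -> f i = f j -> i = j.
Proof.
move=> H; case E: (f i) => [v|] // _ Ef.
apply: (lok_inj H); [exact: lok_lt E | | by rewrite E].
by apply: (lok_lt (v:=v) H); rewrite -Ef.
Qed.

Lemma lok_intro (nb : pred V) (f : alist k) :
  (forall i : V, i < #|nb| -> exists v, f i = Some v /\ nb v) ->
  (forall i : V, ~~ (i < #|nb|) -> f i = None) ->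
  (forall i j : V, i < #|nb| -> j < #|nb| -> f i = f j -> i = j) -> listOK nb f.
Proof.
move=> H1 H2 H3; apply/andP; split.
  apply/forallP=> i; case: ifP => Hi.
    by have [v [-> ->]] := H1 i Hi.
  by rewrite H2 ?Hi.
apply/forallP=> i; apply/forallP=> j; apply/implyP=> /and3P [Hi Hj /eqP E].
by apply/eqP; apply: H3.
Qed.

Lemma lok_ext (nb1 nb2 : pred V) (f : alist k) : nb1 =1 nb2 -> listOK nb1 f -> listOK nb2 f.
Proof.
move=> E H; have Ec : #|nb1| = #|nb2| by apply: eq_card.
apply: lok_intro.
- by move=> i; rewrite -Ec => /(lok_ex H) [v [-> Hv]]; exists v; rewrite -E.
- by move=> i; rewrite -Ec; apply: lok_none.
- by move=> i j; rewrite -!Ec; apply: lok_inj.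
Qed.

Lemma lok_map (nb : pred V) (f : alist k) (s : V -> V) : involutive s -> listOK nb f ->
  listOK (fun z => nb (s z)) [ffun i => omap s (f i)].
Proof.
move=> Hs H.
have Ec : #|(fun z => nb (s z))| = #|nb|.
  rewrite -[RHS](cardsE nb) -(card_preimset _ (inv_inj Hs)).
  by apply: eq_card => z; rewrite !inE.
apply: lok_intro; rewrite Ec.
- move=> i /(lok_ex H) [v [Ev Hv]]; exists (s v); by rewrite ffunE Ev Hs.
- by move=> i Hi; rewrite ffunE (lok_none H Hi).
- move=> i j Hi Hj; rewrite !ffunE => E; apply: (lok_inj H Hi Hj).
  case: (f i) E => [a|]; case: (f j) => [b|] //= [] /(inv_inj Hs) -> //.
Qed.

Lemma lok_perm (nb : pred V) (f : alist k) (r : V -> V) : involutive r ->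
  (forall p : V, (r p < #|nb|) = (p < #|nb|)) -> listOK nb f ->
  listOK nb [ffun p => f (r p)].
Proof.
move=> Hr Hlt H; apply: lok_intro.
- by move=> i Hi; rewrite ffunE; apply: (lok_ex H); rewrite Hlt.
- by move=> i Hi; rewrite ffunE; apply: (lok_none H); rewrite Hlt.
- move=> i j Hi Hj; rewrite !ffunE => E; apply: (inv_inj Hr).
  by apply: (lok_inj H) => //; rewrite Hlt.
Qed.

End Basics.



Section Swap.
Variable k : nat.
Local Notation V := (vtx k).
Local Notation hseq := (seq (query k * answer k)).

Lemma validP (I : inst k) : valid I ->
  [/\ forall u : V, u < k -> imatch I u = u, injective (imatch I),
      forall u, listOK (gedge (imatch I) u) (iadjL I u) &
      forall v, listOK (fun u => gedge (imatch I) u v) (iadjR I v)].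
Proof.
case/and4P=> /forallP H1 /injectiveP H2 /forallP H3 /forallP H4; split=> //.
by move=> u Hu; apply/eqP; move: (H1 u); rewrite Hu.
Qed.

Lemma valid_intro (I : inst k) :
  (forall u : V, u < k -> imatch I u = u) -> injective (imatch I) ->
  (forall u, listOK (gedge (imatch I) u) (iadjL I u)) ->
  (forall v, listOK (fun u => gedge (imatch I) u v) (iadjR I v)) -> valid I.
Proof.
move=> H1 H2 H3 H4; apply/and4P; split.
- by apply/forallP=> u; apply/implyP=> /H1 ->.
- exact/injectiveP.
- exact/forallP.
- exact/forallP.
Qed.

Lemma valid_L2 (I : inst k) (u : V) : valid I -> k <= u -> k <= imatch I u.
Proof.
case/validP=> H1 H2 _ _ Hu; rewrite leqNgt; apply/negP=> Hm.
have := H1 _ Hm => /H2 E; by move: Hm; rewrite E ltnNge Hu.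
Qed.

Definition revq (I : inst k) (q : query k) (u : V) : bool :=
  (k <= u) && match q with
  | inl (s, x, i) => if s then (x == u) && (iadjL I x i == Some (imatch I u))
                     else (x == imatch I u) && (iadjR I x i == Some u)
  | inr (x, y) => (x == u) && (y == imatch I u) end.

Definition Rs (I : inst k) (h : hseq) := [set u | has (fun qa => revq I qa.1 u) h].

Definition swapI (I : inst k) (x u : V) : inst k :=
 let m := imatch I in
 (([ffun w => m (swapf x u w)],
   [ffun w => if (w == x) || (w == u)
              then [ffun i => omap (swapf (m x) (m u)) (iadjL I w i)] else iadjL I w]),
   [ffun y => if (y == m x) || (y == m u)
              then [ffun j => omap (swapf x u) (iadjR I y j)] else iadjR I y]).

Lemma lt_swapf (a b z : V) : k <= a -> k <= b -> (swapf a b z < k) = (z < k).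
Proof.
move=> Ha Hb; rewrite /swapf; case: (eqVneq z a) => [->|za].
  by rewrite !ltnNge Ha Hb.
case: (eqVneq z b) => [->|zb] //.
by rewrite !ltnNge Ha Hb.
Qed.

Lemma eq_swapf (a b z : V) : (a == swapf a b z) = (b == z).
Proof. by rewrite -(inj_eq (@swapf_inj _ a b)) swapfK swapf_l. Qed.

Lemma valid_swap (I : inst k) (x u : V) : valid I -> k <= x -> k <= u -> valid (swapI I x u).
Proof.
move=> HV Hx Hu; have [H1 H2 H3 H4] := validP HV.
set m := imatch I.
have Hmx : k <= m x by apply: valid_L2.
have Hmu : k <= m u by apply: valid_L2.
apply: valid_intro => /=.
- move=> w Hw; rewrite /imatch /= ffunE swapf_id ?H1 //.
  + by apply/eqP=> E; move: Hw; rewrite E ltnNge Hx.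
  + by apply/eqP=> E; move: Hw; rewrite E ltnNge Hu.
- move=> a b; rewrite /imatch /= !ffunE => /H2; exact: swapf_inj.
- move=> w; rewrite /iadjL /imatch /= ffunE.
  case: ifP => Hw.
    apply: (lok_ext (nb1 := fun z => gedge m w (swapf (m x) (m u) z))).
      move=> z; rewrite /gedge ffunE lt_swapf //.
      have -> : m (swapf x u w) = swapf (m x) (m u) (m w).
        by case/orP: Hw => /eqP ->; rewrite ?swapf_l ?swapf_r.
      by rewrite -[m w == _](inj_eq (@swapf_inj _ (m x) (m u))) swapfK.
    by apply: lok_map; [exact: swapfK | exact: H3].
  apply: (lok_ext (nb1 := gedge m w)); last exact: H3.
  move=> z; rewrite /gedge ffunE swapf_id //; [by apply/negP=> /eqP E; rewrite E eqxx in Hw |].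
  by apply/negP=> /eqP E; rewrite E eqxx orbT in Hw.
- move=> y; rewrite /iadjR /imatch /= ffunE.
  case: ifP => Hy.
    apply: (lok_ext (nb1 := fun w => gedge m (swapf x u w) y)).
      by move=> w; rewrite /gedge ffunE lt_swapf.
    exact: (lok_map (nb := fun w => gedge m w y) (swapfK x u) (H4 y)).
  apply: (lok_ext (nb1 := fun w => gedge m w y)); last exact: H4.
  move=> w; rewrite /gedge ffunE; congr (_ || (_ || _)).
  case: (eqVneq w x) => [->|wx]; first rewrite swapf_l.
    apply/idP/idP=> /eqP E; by rewrite E eqxx ?orbT in Hy.
  case: (eqVneq w u) => [->|wu]; first rewrite swapf_r.
    apply/idP/idP=> /eqP E; by rewrite E eqxx ?orbT in Hy.
  by rewrite swapf_id.
Qed.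

Lemma ans_swap (I : inst k) (x u : V) (q : query k) : valid I -> k <= x -> k <= u ->
  ~~ revq I q x -> ~~ revq I q u -> q != inr (x, imatch I u) -> q != inr (u, imatch I x) ->
  ans (swapI I x u) q = ans I q.
Proof.
move=> HV Hx Hu Rx Ru Q1 Q2; have [H1 H2 H3 H4] := validP HV.
have Hmx : k <= imatch I x by apply: valid_L2.
have Hmu : k <= imatch I u by apply: valid_L2.
case: q Rx Ru Q1 Q2 => [[[s a] i]|[a b]] Rx Ru Q1 Q2 /=.
- case: s Rx Ru {Q1 Q2} => /= Rx Ru; congr inl.
    rewrite /iadjL /= ffunE; case: ifP => // Ha; rewrite ffunE.
    case E: (iadjL I a i) => [z|] //=; congr Some.
    have Hz := lok_some (H3 a) E; rewrite /gedge in Hz.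
    have Hak : (a < k) = false by case/orP: Ha => /eqP ->; rewrite ltnNge ?Hx ?Hu.
    rewrite Hak /= in Hz; case/orP: Hz => Hz.
      apply: swapf_id; apply/eqP=> Ez; move: Hz; rewrite Ez ltnNge ?Hmx ?Hmu //.
    case/orP: Ha => /eqP Ea; subst a.
      by move: Rx; rewrite /revq Hx E -(eqP Hz) !eqxx.
    by move: Ru; rewrite /revq Hu E -(eqP Hz) !eqxx.
  rewrite /iadjR /= ffunE; case: ifP => // Ha; rewrite ffunE.
  case E: (iadjR I a i) => [w|] //=; congr Some.
  have Hw := lok_some (H4 a) E; rewrite /gedge in Hw.
  have Hak : (a < k) = false by case/orP: Ha => /eqP ->; rewrite ltnNge ?Hmx ?Hmu.
  rewrite Hak /= in Hw; case/orP: Hw => Hw.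
    apply: swapf_id; apply/eqP=> Ez; move: Hw; rewrite Ez ltnNge ?Hx ?Hu //.
  case/orP: Ha => /eqP Ea; subst a.
    by move/eqP: Hw => /H2 Hw; subst w; move: Rx; rewrite /revq Hx E !eqxx.
  by move/eqP: Hw => /H2 Hw; subst w; move: Ru; rewrite /revq Hu E !eqxx.
- congr inr; rewrite /gedge /imatch /= ffunE; congr (_ || (_ || _)).
  case: (eqVneq a x) => [Ea|ax].
    subst a; rewrite swapf_l.
    have Hb1 : (b == imatch I x) = false by apply/negbTE; move: Rx; rewrite /revq Hx eqxx.
    have Hb2 : (b == imatch I u) = false by apply/negbTE; apply: contra Q1 => /eqP ->.
    rewrite eq_sym Hb2; symmetry; rewrite eq_sym; exact: Hb1.
  case: (eqVneq a u) => [Ea|au].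
    subst a; rewrite swapf_r.
    have Hb1 : (b == imatch I u) = false by apply/negbTE; move: Ru; rewrite /revq Hu eqxx.
    have Hb2 : (b == imatch I x) = false by apply/negbTE; apply: contra Q2 => /eqP ->.
    rewrite eq_sym Hb2; symmetry; rewrite eq_sym; exact: Hb1.
  by rewrite swapf_id.
Qed.

End Swap.



Section Pos.
Variable k : nat.
Local Notation V := (vtx k).
Local Notation hseq := (seq (query k * answer k)).

Lemma inst_eq (I J : inst k) : imatch I = imatch J -> iadjL I = iadjL J -> iadjR I = iadjR J -> I = J.
Proof. by case: I => [[a b] c]; case: J => [[a1 b1] c1]; rewrite /imatch /iadjL /iadjR /= => -> -> ->. Qed.

Lemma swapIK (I : inst k) (x u : V) : swapI (swapI I x u) x u = I.
Proof.
apply: inst_eq.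
- by apply/ffunP=> w; rewrite /imatch /= !ffunE swapfK.
- apply/ffunP=> w; rewrite /iadjL /imatch /= !ffunE.
  case: ifP => Hw; rewrite ?ffunE ?Hw //.
  apply/ffunP=> i; rewrite !ffunE swapf_l swapf_r.
  case: (I.1.2 w i) => //= z; by rewrite swapfC swapfK.
- apply/ffunP=> y; rewrite /iadjR /imatch /= !ffunE swapf_l swapf_r.
  have -> : (y == I.1.1 u) || (y == I.1.1 x) = (y == I.1.1 x) || (y == I.1.1 u) by rewrite orbC.
  case: ifP => Hy; rewrite ?ffunE ?Hy //.
  apply/ffunP=> i; rewrite !ffunE.
  case: (I.2 y i) => //= z; by rewrite swapfK.
Qed.

Lemma imatch_swap (I : inst k) (x u w : V) : imatch (swapI I x u) w = imatch I (swapf x u w).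
Proof. by rewrite /imatch /= ffunE. Qed.

Definition posL (I : inst k) (x i j : V) : inst k :=
  ((imatch I, [ffun w => if w == x then [ffun p => iadjL I x (swapf i j p)] else iadjL I w]),
   iadjR I).
Definition posR (I : inst k) (y i j : V) : inst k :=
  ((imatch I, iadjL I),
   [ffun w => if w == y then [ffun p => iadjR I y (swapf i j p)] else iadjR I w]).

Lemma lt_swapf2 (i j p : V) n : i < n -> j < n -> (swapf i j p < n) = (p < n).
Proof.
move=> Hi Hj; rewrite /swapf; case: (eqVneq p i) => [->|pi]; first by rewrite Hi Hj.
by case: (eqVneq p j) => [->|pj]; rewrite ?Hi ?Hj.
Qed.

Lemma valid_posL (I : inst k) (x i j : V) : valid I ->
  i < #|gedge (imatch I) x| -> j < #|gedge (imatch I) x| -> valid (posL I x i j).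
Proof.
move=> HV Hi Hj; have [H1 H2 H3 H4] := validP HV.
apply: valid_intro => //= w; rewrite /iadjL /= ffunE.
case: (eqVneq w x) => [->|//]; first apply: lok_perm => //; first exact: swapfK.
by move=> p; apply: lt_swapf2.
Qed.

Lemma valid_posR (I : inst k) (y i j : V) : valid I ->
  i < #|(fun w => gedge (imatch I) w y)| -> j < #|(fun w => gedge (imatch I) w y)| ->
  valid (posR I y i j).
Proof.
move=> HV Hi Hj; have [H1 H2 H3 H4] := validP HV.
apply: valid_intro => //= w; rewrite /iadjR /= ffunE.
case: (eqVneq w y) => [->|//]; first apply: lok_perm => //; first exact: swapfK.
by move=> p; apply: lt_swapf2.
Qed.

Lemma posLK (I : inst k) (x i j : V) : posL (posL I x i j) x i j = I.
Proof.
apply: inst_eq => //; apply/ffunP=> w; rewrite /iadjL /= !ffunE.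
case: (eqVneq w x) => [->|//]; apply/ffunP=> p; by rewrite !ffunE eqxx ffunE swapfK.
Qed.

Lemma posRK (I : inst k) (y i j : V) : posR (posR I y i j) y i j = I.
Proof.
apply: inst_eq => //; apply/ffunP=> w; rewrite /iadjR /= !ffunE.
case: (eqVneq w y) => [->|//]; apply/ffunP=> p; by rewrite !ffunE eqxx ffunE swapfK.
Qed.

Lemma ans_posL (I : inst k) (x i j : V) q : q != inl (true, x, i) -> q != inl (true, x, j) ->
  ans (posL I x i j) q = ans I q.
Proof.
case: q => [[[s a] p]|[a b]] //= Q1 Q2; case: s Q1 Q2 => // Q1 Q2.
rewrite /iadjL /= ffunE; case: (eqVneq a x) => [Ea|//]; subst a.
rewrite ffunE swapf_id //; [by apply: contra Q1 => /eqP -> | by apply: contra Q2 => /eqP ->].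
Qed.

Lemma ans_posR (I : inst k) (y i j : V) q : q != inl (false, y, i) -> q != inl (false, y, j) ->
  ans (posR I y i j) q = ans I q.
Proof.
case: q => [[[s a] p]|[a b]] //= Q1 Q2; case: s Q1 Q2 => // Q1 Q2.
rewrite /iadjR /= ffunE; case: (eqVneq a y) => [Ea|//]; subst a.
rewrite ffunE swapf_id //; [by apply: contra Q1 => /eqP -> | by apply: contra Q2 => /eqP ->].
Qed.

Variable A : strategy k.

Lemma hist_S (I : inst k) t :
  hist A I t.+1 = rcons (hist A I t) (A (hist A I t), ans I (A (hist A I t))).
Proof. by []. Qed.

Lemma size_hist (I : inst k) t : size (hist A I t) = t.
Proof. by elim: t => //= t IH; rewrite size_rcons IH. Qed.

Lemma consistent_hist (I : inst k) t : consistent I (hist A I t).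
Proof. by elim: t => //= t IH; rewrite /consistent all_rcons /= eqxx. Qed.

Lemma hist_eq (I J : inst k) t : consistent J (hist A I t) -> hist A J t = hist A I t.
Proof.
elim: t => //= t IH; rewrite /consistent all_rcons => /andP [/= /eqP E H].
by rewrite IH // E.
Qed.

Lemma hist_sub (I : inst k) t t' : t <= t' -> {subset hist A I t <= hist A I t'}.
Proof.
move=> H; elim: t' H => [|t' IH]; first by rewrite leqn0 => /eqP ->.
rewrite leq_eqVlt => /orP [/eqP -> //|H] qa /(IH H) Hq.
by rewrite hist_S mem_rcons inE Hq orbT.
Qed.

Lemma consistent_ans (I J : inst k) (h : hseq) : consistent I h ->
  (forall qa, qa \in h -> ans J qa.1 = ans I qa.1) -> consistent J h.
Proof.
move=> /allP H E; apply/allP=> qa Hq; rewrite E //; exact: H.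
Qed.

End Pos.



Lemma cardsU_le (T : finType) (A B : {set T}) : #|A :|: B| <= #|A| + #|B|.
Proof. by rewrite cardsU leq_subr. Qed.

Lemma double_count (T U W : finType) (B : pred T) (Q : T -> pred U) (F : T -> U -> W)
  (a : nat) (Vw : pred W) :
  (forall I, B I -> a <= #|Q I|) ->
  (forall I u, B I -> Q I u -> Vw (F I u)) ->
  (forall I1 u1 I2 u2, B I1 -> Q I1 u1 -> B I2 -> Q I2 u2 -> F I1 u1 = F I2 u2 ->
      I1 = I2 /\ u1 = u2) ->
  a * #|B| <= #|Vw|.
Proof.
move=> Ha HF Hinj.
pose S := [set p : T * U | B p.1 && Q p.1 p.2].
have E1 : a * #|B| <= #|S|.
  rewrite -sum1_card big_distrr /= -sum1_card.
  have -> : \sum_(p in S) 1 = \sum_(i | B i) \sum_(j | Q i j) 1.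
    rewrite pair_big_dep; apply: eq_bigl => p; by rewrite inE.
  apply: leq_sum => i Hi; rewrite muln1 sum1_card; exact: Ha.
apply: (leq_trans E1).
have <- : #|[set F p.1 p.2 | p in S]| = #|S|.
  apply: card_in_imset => [[i1 u1]] [i2 u2]; rewrite !inE /= => /andP [H1 H2] /andP [H3 H4] E.
  by have [-> ->] := Hinj _ _ _ _ H1 H2 H3 H4 E.
rewrite -(cardsE Vw); apply: subset_leq_card; apply/subsetP=> w /imsetP [[i u]].
by rewrite !inE /= => /andP [H1 H2] ->; apply: HF.
Qed.

Lemma card_ord_lt N n : n <= N -> #|[set i : 'I_N | i < n]| = n.
Proof.
move=> H; have -> : [set i : 'I_N | i < n] = [set widen_ord H j | j : 'I_n].
  apply/setP=> i; rewrite inE; apply/idP/imsetP.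
    by move=> Hi; exists (Ordinal Hi) => //; apply: val_inj.
  by case=> j _ ->; rewrite /= ltn_ord.
by rewrite card_imset ?card_ord // => x y /(congr1 val) /= /val_inj.
Qed.

Lemma card_ord_ge N n : n <= N -> #|[set i : 'I_N | n <= i]| = N - n.
Proof.
move=> H; have := cardsC [set i : 'I_N | i < n]; rewrite card_ord_lt // card_ord.
have -> : ~: [set i : 'I_N | i < n] = [set i : 'I_N | n <= i].
  by apply/setP=> i; rewrite !inE -leqNgt.
by move=> E; rewrite -[in RHS]E addKn.
Qed.

Lemma card_pmap_le (T : Type) (V : finType) (g : T -> option V) (s : seq T) :
  #|[set y | y \in pmap g s]| <= count (fun x => g x) s.
Proof. by rewrite cardsE -size_pmap card_size. Qed.

Section Count.
Variable k : nat.
Local Notation V := (vtx k).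
Local Notation hseq := (seq (query k * answer k)).

Definition cnt2 (I : inst k) (x : V) (h : hseq) :=
  count (fun qa => if qa.1 is inr (a, b) then (a == x) || (b == imatch I x) else false) h.
Definition cntL (x : V) (h : hseq) :=
  count (fun qa => match qa.1 with inl (true, a, _) => a == x | _ => false end) h.
Definition cntR (y : V) (h : hseq) :=
  count (fun qa => match qa.1 with inl (false, a, _) => a == y | _ => false end) h.

Lemma blockL_le (I : inst k) (x : V) (h : hseq) : valid I ->
  #|[set u' | inr (x, imatch I u') \in map fst h]| <= cnt2 I x h.
Proof.
case/validP=> _ Hinj _ _.
pose g (qa : query k * answer k) := if qa.1 is inr (a, b) then (if a == x then Some b else None) else None.
have -> : [set u' | inr (x, imatch I u') \in map fst h] = imatch I @^-1: [set y | y \in pmap g h].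
  apply/setP=> u'; rewrite !inE mem_pmap; apply/idP/idP.
    case/mapP=> qa Hqa E; apply/mapP; exists qa => //; by rewrite /g -E eqxx.
  case/mapP=> [[q a]] Hqa; rewrite /g /=; case: q Hqa => [//|[a' b]] Hqa.
  by case: eqP => // E [E2]; apply/mapP; exists (inr (a', b), a); rewrite //= E E2.
rewrite card_preimset //; apply: (leq_trans (card_pmap_le _ _)).
apply: sub_count => [[q a]]; rewrite /g /=; case: q => // [[a' b]].
by case: eqP.
Qed.

Lemma blockR_le (I : inst k) (x : V) (h : hseq) :
  #|[set u' | inr (u', imatch I x) \in map fst h]| <= cnt2 I x h.
Proof.
pose g (qa : query k * answer k) := if qa.1 is inr (a, b) then (if b == imatch I x then Some a else None) else None.
have : [set u' | inr (u', imatch I x) \in map fst h] \subset [set y | y \in pmap g h].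
  apply/subsetP=> u'; rewrite !inE mem_pmap.
  case/mapP=> qa Hqa E; apply/mapP; exists qa => //; by rewrite /g -E eqxx.
move/subset_leq_card/leq_trans; apply; apply: (leq_trans (card_pmap_le _ _)).
apply: sub_count => [[q a]]; rewrite /g /=; case: q => // [[a' b]].
by case: eqP => // _; rewrite orbT.
Qed.

Lemma blockP_le (x : V) (h : hseq) :
  #|[set j | inl (true, x, j) \in map fst h]| <= cntL x h.
Proof.
pose g (qa : query k * answer k) :=
  match qa.1 with inl (true, a, j) => (if a == x then Some j else None) | _ => None end.
have : [set j | inl (true, x, j) \in map fst h] \subset [set y | y \in pmap g h].
  apply/subsetP=> u'; rewrite !inE mem_pmap.
  case/mapP=> qa Hqa E; apply/mapP; exists qa => //; by rewrite /g -E eqxx.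
move/subset_leq_card/leq_trans; apply; apply: (leq_trans (card_pmap_le _ _)).
apply: sub_count => [[q a]]; rewrite /g /=; case: q => // [[[[] a'] b]] //.
by case: eqP.
Qed.

Lemma blockPR_le (y : V) (h : hseq) :
  #|[set j | inl (false, y, j) \in map fst h]| <= cntR y h.
Proof.
pose g (qa : query k * answer k) :=
  match qa.1 with inl (false, a, j) => (if a == y then Some j else None) | _ => None end.
have : [set j | inl (false, y, j) \in map fst h] \subset [set z | z \in pmap g h].
  apply/subsetP=> u'; rewrite !inE mem_pmap.
  case/mapP=> qa Hqa E; apply/mapP; exists qa => //; by rewrite /g -E eqxx.
move/subset_leq_card/leq_trans; apply; apply: (leq_trans (card_pmap_le _ _)).
apply: sub_count => [[q a]]; rewrite /g /=; case: q => // [[[[] a'] b]] //.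
by case: eqP.
Qed.

Definition freeU (I : inst k) (h : hseq) (x : V) :=
  [set u' : V | [&& k <= u', u' != x, u' \notin Rs I h,
     inr (x, imatch I u') \notin map fst h & inr (u', imatch I x) \notin map fst h]].

Lemma freeU_ge (I : inst k) (h : hseq) (x : V) : valid I ->
  5 * k - 1 <= #|freeU I h x| + #|Rs I h| + 2 * cnt2 I x h.
Proof.
move=> HV.
have HL : #|[set u' : V | k <= u'] :\ x| >= 5 * k - 1.
  have := cardsD1 x [set u' : V | k <= u']; rewrite card_ord_ge ?leq_pmull //.
  have -> : 6 * k - k = 5 * k by rewrite -{2}(mul1n k) -mulnBl.
  move=> ->; case: (x \in _) => /=; lia.
apply: (leq_trans HL).
have Hsub : [set u' : V | k <= u'] :\ x \subset
   ((freeU I h x :|: Rs I h) :|: [set u' | inr (x, imatch I u') \in map fst h])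
      :|: [set u' | inr (u', imatch I x) \in map fst h].
  apply/subsetP=> u'; rewrite !inE => /andP [Hux Hk]; rewrite Hux Hk /=.
  by case: has; case: (inr (x, _) \in _); case: (inr (u', _) \in _).
apply: (leq_trans (subset_leq_card Hsub)).
apply: (leq_trans (cardsU_le _ _)); rewrite mul2n -addnn !addnA.
apply: leq_add; last exact: blockR_le.
apply: (leq_trans (cardsU_le _ _)); apply: leq_add; last exact: blockL_le.
exact: cardsU_le.
Qed.

End Count.



Lemma sum_bool_card (T : finType) (P : pred T) : \sum_(i : T) (P i : nat) = #|P|.
Proof. rewrite -sum1_card [RHS]big_mkcond /=; apply: eq_bigr => i _; by rewrite unfold_in; case: (P i). Qed.

Lemma sum_count_le (T : finType) (X : Type) (P : T -> pred X) (s : seq X) c :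
  (forall x, \sum_(u : T) (P u x : nat) <= c) -> \sum_(u : T) count (P u) s <= c * size s.
Proof.
move=> H; elim: s => [|x s IH]; first by rewrite big1.
rewrite /= mulnS.
have -> : \sum_(u : T) (P u x + count (P u) s) = \sum_(u : T) (P u x : nat) + \sum_(u : T) count (P u) s.
  by rewrite big_split.
exact: leq_add.
Qed.

Lemma markov_card (T : finType) (f : T -> nat) c : c * #|[pred u | c <= f u]| <= \sum_(u : T) f u.
Proof.
apply: (@leq_trans (\sum_(u | c <= f u) f u)).
  rewrite mulnC -sum_nat_const; apply: leq_sum => u; by rewrite inE.
rewrite [X in _ <= X](bigID (fun u => c <= f u)) /=; apply: leq_addr.
Qed.

Section Struct.
Variable k : nat.
Local Notation V := (vtx k).
Local Notation hseq := (seq (query k * answer k)).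

Lemma sum_cnt2 (I : inst k) (h : hseq) : valid I -> \sum_(u : V) cnt2 I u h <= 2 * size h.
Proof.
case/validP=> _ Hinj _ _; apply: sum_count_le => [[q a]] /=; case: q => [_|[x y]].
  by rewrite big1.
apply: (@leq_trans (\sum_(u : V) ((x == u) : nat) + \sum_(u : V) ((y == imatch I u) : nat))).
  rewrite -big_split /=; apply: leq_sum => u _; by case: (x == u); case: (y == _).
rewrite !sum_bool_card.
have -> : #|(fun u => x == u)| = 1.
  by rewrite -[RHS](card1 x); apply: eq_card => u; rewrite !inE eq_sym.
have -> : #|(fun u => y == imatch I u)| = 1.
  rewrite -[RHS](cards1 y) -(card_preimset _ Hinj); apply: eq_card => u; by rewrite !inE eq_sym.
done.
Qed.

Lemma sum_cntL (h : hseq) : \sum_(u : V) cntL u h <= 1 * size h.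
Proof.
apply: sum_count_le => [[q a]] /=; case: q => [[[[] x] i]|[x y]]; try by rewrite big1.
rewrite sum_bool_card -[X in _ <= X](card1 x); rewrite leq_eqVlt; apply/orP; left; apply/eqP.
by apply: eq_card => u; rewrite !inE.
Qed.

Lemma sum_cntR (I : inst k) (h : hseq) : valid I -> \sum_(u : V) cntR (imatch I u) h <= 1 * size h.
Proof.
case/validP=> _ Hinj _ _.
apply: sum_count_le => [[q a]] /=; case: q => [[[[] x] i]|[x y]]; try by rewrite big1.
rewrite sum_bool_card -[X in _ <= X](cards1 x) -(card_preimset _ Hinj); rewrite leq_eqVlt; apply/orP; left; apply/eqP.
by apply: eq_card => u; rewrite !inE.
Qed.

Lemma disc_L2 (h : hseq) (u v : V) (I : inst k) : valid I -> consistent I h ->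
  discovered h u v -> (k <= u) && (imatch I u == v).
Proof. by move=> HV HC /forallP /(_ I); rewrite HV HC. Qed.

Lemma struct_lemma (I : inst k) (h : hseq) (u v : V) : valid I -> consistent I h ->
  discovered h u v -> u \notin Rs I h -> 5 * k - 1 <= #|Rs I h| + 2 * cnt2 I u h.
Proof.
move=> HV HC Hd HR; have /andP [Hu /eqP Ev] := disc_L2 HV HC Hd.
have [H1 H2 H3 H4] := validP HV.
have E0 : freeU I h u = set0.
  apply/setP=> u'; rewrite !inE; apply/negP => /and5P [Hu' Hne HR' Q1 Q2].
  set J := swapI I u u'.
  have HJ : valid J by apply: valid_swap.
  have CJ : consistent J h.
    apply: (consistent_ans HC) => qa Hqa.
    apply: ans_swap => //.
    - by apply: contra HR => Hr; rewrite inE; apply/hasP; exists qa.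
    - by apply: contra HR' => Hr; apply/hasP; exists qa.
    - by apply: contra Q1 => /eqP E; apply/mapP; exists qa.
    - by apply: contra Q2 => /eqP E; apply/mapP; exists qa.
  have /andP [_ /eqP] := disc_L2 HJ CJ Hd.
  rewrite imatch_swap swapf_l -Ev => /H2 E; by rewrite E eqxx in Hne.
have := freeU_ge h u HV; by rewrite E0 cards0 add0n.
Qed.

Lemma disc_rev (I : inst k) (h : hseq) : valid I -> consistent I h ->
  size h <= k * k -> 2 * k <= ndisc h -> k <= #|Rs I h|.
Proof.
move=> HV HC Hs Hn; rewrite leqNgt; apply/negP => HR.
pose D := [set u : V | [exists v, discovered h u v]] :\: Rs I h.
have HD : 2 * k - #|Rs I h| <= #|D|.
  rewrite leq_subLR; apply: (leq_trans Hn); rewrite /ndisc.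
  have := cardsU (Rs I h) D; have -> : Rs I h :|: D = Rs I h :|: [set u : V | [exists v, discovered h u v]].
    by rewrite /D setDE setUIr setUCr setIT.
  move=> E; apply: (leq_trans (subset_leq_card (subsetUr (Rs I h) _))); rewrite E.
  exact: leq_subr.
have Hc : forall u, u \in D -> 2 * k <= cnt2 I u h.
  move=> u; rewrite inE => /andP [HuR]; rewrite inE => /existsP [v Hv].
  have := struct_lemma HV HC Hv HuR; lia.
have := sum_cnt2 h HV.
have : \sum_(u : V) cnt2 I u h >= (2 * k) * #|D|.
  apply: leq_trans (markov_card (fun u => cnt2 I u h) (2 * k)).
  apply: leq_mul => //; apply: subset_leq_card.
  by apply/subsetP=> u Hu; rewrite inE; apply: Hc.
move=> H1 H2; have := leq_trans H1 H2; move: HD HR Hs; nia.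
Qed.

End Struct.



Section Step.
Variable k : nat.
Local Notation V := (vtx k).
Local Notation hseq := (seq (query k * answer k)).
Variable A : strategy k.

Definition expensive (I : inst k) (u : V) (h : hseq) :=
  [|| k <= cnt2 I u h, k <= 2 * cntL u h | k <= 2 * cntR (imatch I u) h].

Definition cheap (I : inst k) (s : nat) :=
  let h := hist A I s in
  [exists u, [&& u \notin Rs I h, revq I (A h) u, #|Rs I h| < k & ~~ expensive I u h]].

Lemma cheapP I s : cheap I s -> exists u,
  [/\ u \notin Rs I (hist A I s), revq I (A (hist A I s)) u, #|Rs I (hist A I s)| < k &
      ~~ expensive I u (hist A I s)].
Proof. by case/existsP=> u /and4P [? ? ? ?]; exists u. Qed.

Lemma swap_consistent (I : inst k) (h : hseq) (x u : V) : valid I -> consistent I h ->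
  k <= x -> x \notin Rs I h -> u \in freeU I h x -> consistent (swapI I x u) h.
Proof.
move=> HV HC Hx HR; rewrite inE => /and5P [Hu' Hne HR' Q1 Q2].
apply: (consistent_ans HC) => qa Hqa.
apply: ans_swap => //.
- by apply: contra HR => Hr; rewrite inE; apply/hasP; exists qa.
- by apply: contra HR' => Hr; rewrite inE; apply/hasP; exists qa.
- by apply: contra Q1 => /eqP E; apply/mapP; exists qa.
- by apply: contra Q2 => /eqP E; apply/mapP; exists qa.
Qed.

Definition QA (s : nat) (I : inst k) (u : V) :=
  if A (hist A I s) is inr (x, _) then u \in freeU I (hist A I s) x else false.
Definition FA (s : nat) (I : inst k) (u : V) :=
  if A (hist A I s) is inr (x, _) then swapI I x u else I.
Definition BA (s : nat) :=
  [pred I | valid I && cheap I s && (if A (hist A I s) is inr _ then true else false)].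

Lemma caseA s : (2 * k) * #|BA s| <= #|[pred I : inst k | valid I]|.
Proof.
apply: (@double_count _ _ _ (BA s) (QA s) (FA s)).
- move=> I /andP [/andP [HV /cheapP [u [HuR Hrev HRk Hexp]]] Hsh].
  rewrite /QA; case E: (A (hist A I s)) => [q|[x y]]; first by rewrite E in Hsh.
  rewrite E /revq /= in Hrev; case/and3P: Hrev => Hu /eqP Exu /eqP Ey; subst x y.
  have H := freeU_ge (hist A I s) u HV.
  have -> : #|fun v => v \in freeU I (hist A I s) u| = #|freeU I (hist A I s) u| by [].
  move: Hexp; rewrite /expensive negb_or => /andP [Hc _]; lia.
- move=> I u /andP [/andP [HV /cheapP [u0 [HuR Hrev HRk Hexp]]] Hsh].
  rewrite /QA /FA; case E: (A (hist A I s)) => [q|[x y]] Hu; first by rewrite E in Hsh.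
  rewrite E /revq /= in Hrev; case/and3P: Hrev => Hu0 /eqP Exu /eqP Ey; subst x y.
  rewrite inE /=; apply: valid_swap => //; by move: Hu; rewrite inE => /and5P [].
- move=> I1 u1 I2 u2.
  move=> /andP [/andP [HV1 /cheapP [w1 [HR1 Hrev1 _ _]]] Hs1] + /andP [/andP [HV2 /cheapP [w2 [HR2 Hrev2 _ _]]] Hs2].
  rewrite /QA /FA; case E1: (A (hist A I1 s)) => [q|[x1 y1]] Hu1; first by rewrite E1 in Hs1.
  case E2: (A (hist A I2 s)) => [q|[x2 y2]] Hu2 EJ; first by rewrite E2 in Hs2.
  rewrite E1 /revq /= in Hrev1; case/and3P: Hrev1 => Hw1 /eqP Ex1 /eqP Ey1; subst x1 y1.
  rewrite E2 /revq /= in Hrev2; case/and3P: Hrev2 => Hw2 /eqP Ex2 /eqP Ey2; subst x2 y2.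
  set J := swapI I1 w1 u1.
  have HJ1 : hist A J s = hist A I1 s.
    by apply: hist_eq; apply: swap_consistent => //; apply: consistent_hist.
  have HJ2 : hist A J s = hist A I2 s.
    rewrite /J EJ; apply: hist_eq; apply: swap_consistent => //; apply: consistent_hist.
  have : A (hist A I1 s) = A (hist A I2 s) by rewrite -HJ1 HJ2.
  rewrite E1 E2 => -[Ew Em]; subst w2.
  have HVJ : valid J by apply: valid_swap => //; move: Hu1; rewrite inE => /and5P [].
  have [_ Hinj _ _] := validP HVJ.
  have E1' : imatch J u1 = imatch I1 w1 by rewrite imatch_swap swapf_r.
  have E2' : imatch J u2 = imatch I2 w1 by rewrite /J EJ imatch_swap swapf_r.
  have Eu : u1 = u2 by apply: Hinj; rewrite E1' E2' Em.
  subst u2; split=> //.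
  have : swapI J w1 u1 = swapI (swapI I2 w1 u1) w1 u1 by rewrite /J EJ.
  by rewrite /J !swapIK.
Qed.

Lemma freeP_ge (deg : nat) (i : V) (P : pred V) : deg <= 6 * k ->
  deg <= #|(fun j : V => [&& j < deg, j != i & ~~ P j])| + 1 + #|P|.
Proof.
move=> Hd; rewrite -{1}(card_ord_lt Hd) -(cardsE (fun j : V => [&& j < deg, j != i & ~~ P j])) -(cardsE P).
have Hsub : [set j : V | j < deg] \subset
   ([set j : V | [&& j < deg, j != i & ~~ P j]] :|: [set i]) :|: [set j | P j].
  apply/subsetP=> j; rewrite !inE => Hj; rewrite Hj /=.
  by case: (j == i); case: (P j).
apply: (leq_trans (subset_leq_card Hsub)); apply: (leq_trans (cardsU_le _ _)).
apply: leq_add => //; apply: (leq_trans (cardsU_le _ _)); by rewrite cards1.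
Qed.

Lemma freeP_ge' (deg : nat) (i : V) (P : pred V) c a : deg <= 6 * k -> #|P| <= c ->
  a + 1 + c <= deg -> a <= #|(fun j : V => [&& j < deg, j != i & ~~ P j])|.
Proof. move=> Hd Hc Ha; have := freeP_ge i P Hd; lia. Qed.

Lemma degL_ge (I : inst k) (x : V) : valid I -> k <= x -> k.+1 <= #|gedge (imatch I) x|.
Proof.
move=> HV Hx; have Hmx := valid_L2 HV Hx.
have Hsub : imatch I x |: [set z : V | z < k] \subset [set z | gedge (imatch I) x z].
  apply/subsetP=> z; rewrite !inE /gedge => /orP [/eqP ->|->]; by rewrite ?eqxx ?orbT.
move: (subset_leq_card Hsub); rewrite cardsU1 card_ord_lt ?leq_pmull // inE cardsE.
by rewrite ltnNge Hmx.
Qed.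

Lemma degR_ge (I : inst k) (u : V) : valid I -> k <= u ->
  k.+1 <= #|(fun w => gedge (imatch I) w (imatch I u))|.
Proof.
move=> HV Hu.
have Hsub : u |: [set z : V | z < k] \subset [set w | gedge (imatch I) w (imatch I u)].
  apply/subsetP=> z; rewrite !inE /gedge => /orP [/eqP ->|->]; by rewrite ?eqxx ?orbT.
move: (subset_leq_card Hsub); rewrite cardsU1 card_ord_lt ?leq_pmull // inE cardsE.
by rewrite ltnNge Hu.
Qed.

Lemma card_le6 (P : pred V) : #|P| <= 6 * k.
Proof. by rewrite -[X in _ <= X]card_ord max_card. Qed.

Definition QB (s : nat) (I : inst k) (j : V) :=
  match A (hist A I s) with
  | inl (true, x, i) => [&& j < #|gedge (imatch I) x|, j != i &
                            inl (true, x, j) \notin map fst (hist A I s)]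
  | _ => false end.
Definition FB (s : nat) (I : inst k) (j : V) :=
  match A (hist A I s) with inl (true, x, i) => posL I x i j | _ => I end.
Definition BB (s : nat) :=
  [pred I | valid I && cheap I s &&
     (match A (hist A I s) with inl (true, _, _) => true | _ => false end)].

Lemma posL_consistent (I : inst k) (h : hseq) (x i j : V) : valid I -> consistent I h ->
  k <= x -> x \notin Rs I h -> iadjL I x i = Some (imatch I x) ->
  inl (true, x, j) \notin map fst h -> consistent (posL I x i j) h.
Proof.
move=> HV HC Hx HR Hi Hj; apply: (consistent_ans HC) => qa Hqa.
apply: ans_posL.
- apply/eqP=> E; move: HR; rewrite inE => /hasP; apply; exists qa => //.
  by rewrite E /revq /= Hx eqxx Hi eqxx.
- by apply: contra Hj => /eqP E; apply/mapP; exists qa.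
Qed.

Lemma caseB s : (k - k %/ 2) * #|BB s| <= #|[pred I : inst k | valid I]|.
Proof.
apply: (@double_count _ _ _ (BB s) (QB s) (FB s)).
- move=> I /andP [/andP [HV /cheapP [u [HuR Hrev HRk Hexp]]] Hsh].
  rewrite /QB; case E: (A (hist A I s)) => [[[[] x] i]|q]; rewrite E in Hsh => //.
  rewrite E /revq /= in Hrev; case/and3P: Hrev => Hu /eqP Exu _; subst x.
  have Hd := degL_ge HV Hu.
  have HS := blockP_le u (hist A I s); rewrite cardsE in HS.
  apply: (@freeP_ge' #|gedge (imatch I) u| i (fun j => inl (true,u,j) \in map fst (hist A I s)) _ _ (card_le6 _) HS).
  move: Hexp; rewrite /expensive !negb_or => /and3P [_ Hc _]; lia.
- move=> I j /andP [/andP [HV /cheapP [u [HuR Hrev HRk Hexp]]] Hsh].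
  rewrite /QB /FB; case E: (A (hist A I s)) => [[[[] x] i]|q]; rewrite E in Hsh => // Hj.
  rewrite E /revq /= in Hrev; case/and3P: Hrev => Hu /eqP Exu /eqP Ei; subst x.
  have [_ _ H3 _] := validP HV.
  rewrite inE; apply: valid_posL => //; first exact: (lok_lt (H3 u) Ei).
  by case/and3P: Hj.
- move=> I1 j1 I2 j2.
  move=> /andP [/andP [HV1 /cheapP [u1 [HR1 Hrev1 _ _]]] Hs1] + /andP [/andP [HV2 /cheapP [u2 [HR2 Hrev2 _ _]]] Hs2].
  rewrite /QB /FB; case E1: (A (hist A I1 s)) => [[[[] x1] i1]|q]; rewrite E1 in Hs1 => // Hj1.
  case E2: (A (hist A I2 s)) => [[[[] x2] i2]|q]; rewrite E2 in Hs2 => // Hj2 EJ.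
  rewrite E1 /revq /= in Hrev1; case/and3P: Hrev1 => Hu1 /eqP Ex1 /eqP Ei1; subst x1.
  rewrite E2 /revq /= in Hrev2; case/and3P: Hrev2 => Hu2 /eqP Ex2 /eqP Ei2; subst x2.
  case/and3P: Hj1 => Hj1a Hj1b Hj1c; case/and3P: Hj2 => Hj2a Hj2b Hj2c.
  set J := posL I1 u1 i1 j1.
  have HJ1 : hist A J s = hist A I1 s.
    by apply: hist_eq; apply: posL_consistent => //; apply: consistent_hist.
  have HJ2 : hist A J s = hist A I2 s.
    rewrite /J EJ; apply: hist_eq; apply: posL_consistent => //; apply: consistent_hist.
  have : A (hist A I1 s) = A (hist A I2 s) by rewrite -HJ1 HJ2.
  rewrite E1 E2 => -[Eu Ei]; subst u2 i2.
  have [_ _ H31 _] := validP HV1.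
  have HVJ : valid J.
    apply: valid_posL => //; first exact: (lok_lt (H31 u1) Ei1).
  have [_ _ H3 _] := validP HVJ.
  have EJ1 : iadjL J u1 j1 = Some (imatch J u1).
    by rewrite /iadjL /= ffunE eqxx ffunE swapf_r.
  have EJ2 : iadjL J u1 j2 = Some (imatch J u1).
    by rewrite /J EJ /iadjL /= ffunE eqxx ffunE swapf_r.
  have Ej : j1 = j2 by apply: (lok_inj_some (H3 u1)); rewrite ?EJ1 ?EJ2.
  subst j2; split=> //.
  have : posL J u1 i1 j1 = posL (posL I2 u1 i1 j1) u1 i1 j1 by rewrite /J EJ.
  by rewrite /J !posLK.
Qed.

Definition QC (s : nat) (I : inst k) (j : V) :=
  match A (hist A I s) with
  | inl (false, y, i) => [&& j < #|(fun w => gedge (imatch I) w y)|, j != i &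
                            inl (false, y, j) \notin map fst (hist A I s)]
  | _ => false end.
Definition FC (s : nat) (I : inst k) (j : V) :=
  match A (hist A I s) with inl (false, y, i) => posR I y i j | _ => I end.
Definition BC (s : nat) :=
  [pred I | valid I && cheap I s &&
     (match A (hist A I s) with inl (false, _, _) => true | _ => false end)].

Lemma posR_consistent (I : inst k) (h : hseq) (u i j : V) : valid I -> consistent I h ->
  k <= u -> u \notin Rs I h -> iadjR I (imatch I u) i = Some u ->
  inl (false, imatch I u, j) \notin map fst h -> consistent (posR I (imatch I u) i j) h.
Proof.
move=> HV HC Hx HR Hi Hj; apply: (consistent_ans HC) => qa Hqa.
apply: ans_posR.
- apply/eqP=> E; move: HR; rewrite inE => /hasP; apply; exists qa => //.
  by rewrite E /revq /= Hx eqxx Hi eqxx.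
- by apply: contra Hj => /eqP E; apply/mapP; exists qa.
Qed.

Lemma caseC s : (k - k %/ 2) * #|BC s| <= #|[pred I : inst k | valid I]|.
Proof.
apply: (@double_count _ _ _ (BC s) (QC s) (FC s)).
- move=> I /andP [/andP [HV /cheapP [u [HuR Hrev HRk Hexp]]] Hsh].
  rewrite /QC; case E: (A (hist A I s)) => [[[[] y] i]|q]; rewrite E in Hsh => //.
  rewrite E /revq /= in Hrev; case/and3P: Hrev => Hu /eqP Eyu _; subst y.
  have Hd := degR_ge HV Hu.
  have HS := blockPR_le (imatch I u) (hist A I s); rewrite cardsE in HS.
  apply: (@freeP_ge' #|(fun w => gedge (imatch I) w (imatch I u))| i
     (fun j => inl (false, imatch I u, j) \in map fst (hist A I s)) _ _ (card_le6 _) HS).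
  move: Hexp; rewrite /expensive !negb_or => /and3P [_ _ Hc]; lia.
- move=> I j /andP [/andP [HV /cheapP [u [HuR Hrev HRk Hexp]]] Hsh].
  rewrite /QC /FC; case E: (A (hist A I s)) => [[[[] y] i]|q]; rewrite E in Hsh => // Hj.
  rewrite E /revq /= in Hrev; case/and3P: Hrev => Hu /eqP Eyu /eqP Ei; subst y.
  have [_ _ _ H4] := validP HV.
  rewrite inE; apply: valid_posR => //; first exact: (lok_lt (H4 _) Ei).
  by case/and3P: Hj.
- move=> I1 j1 I2 j2.
  move=> /andP [/andP [HV1 /cheapP [u1 [HR1 Hrev1 _ _]]] Hs1] + /andP [/andP [HV2 /cheapP [u2 [HR2 Hrev2 _ _]]] Hs2].
  rewrite /QC /FC; case E1: (A (hist A I1 s)) => [[[[] y1] i1]|q]; rewrite E1 in Hs1 => // Hj1.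
  case E2: (A (hist A I2 s)) => [[[[] y2] i2]|q]; rewrite E2 in Hs2 => // Hj2 EJ.
  rewrite E1 /revq /= in Hrev1; case/and3P: Hrev1 => Hu1 /eqP Ey1 /eqP Ei1; subst y1.
  rewrite E2 /revq /= in Hrev2; case/and3P: Hrev2 => Hu2 /eqP Ey2 /eqP Ei2.
  case/and3P: Hj1 => Hj1a Hj1b Hj1c; case/and3P: Hj2 => Hj2a Hj2b Hj2c.
  set J := posR I1 (imatch I1 u1) i1 j1.
  have HJ1 : hist A J s = hist A I1 s.
    by apply: hist_eq; apply: posR_consistent => //; apply: consistent_hist.
  have HJ2 : hist A J s = hist A I2 s.
    rewrite /J EJ Ey2; apply: hist_eq; apply: posR_consistent => //; try apply: consistent_hist;
      by rewrite -Ey2.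
  have : A (hist A I1 s) = A (hist A I2 s) by rewrite -HJ1 HJ2.
  rewrite E1 E2 => -[Ey Ei]; subst i2 y2.
  have [_ _ _ H41] := validP HV1.
  have HVJ : valid J.
    apply: valid_posR => //; first exact: (lok_lt (H41 _) Ei1).
  have [_ Hinj _ H4] := validP HVJ.
  have Em : imatch I2 = imatch J by rewrite /J EJ.
  have Eu : u1 = u2.
    apply: Hinj; have -> : imatch J u1 = imatch I1 u1 by [].
    by rewrite Ey Em.
  subst u2.
  have EJ1 : iadjR J (imatch I1 u1) j1 = Some u1.
    by rewrite /iadjR /= ffunE eqxx ffunE swapf_r.
  have EJ2 : iadjR J (imatch I1 u1) j2 = Some u1.
    by rewrite /J EJ Ey /iadjR /= ffunE eqxx ffunE swapf_r.
  have Ej : j1 = j2 by apply: (lok_inj_some (H4 (imatch I1 u1))); rewrite ?EJ1 ?EJ2.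
  subst j2; split=> //.
  have : posR J (imatch I1 u1) i1 j1 = posR (posR I2 (imatch I1 u1) i1 j1) (imatch I1 u1) i1 j1
    by rewrite /J EJ Ey.
  by rewrite /J !posRK.
Qed.

End Step.



Section Final.
Variable k : nat.
Local Notation V := (vtx k).
Local Notation hseq := (seq (query k * answer k)).
Variable A : strategy k.

Lemma revq_uniq (I : inst k) q (u1 u2 : V) : revq I q u1 -> revq I q u2 -> u1 = u2.
Proof.
case: q => [[[[] x] i]|[x y]] /and3P [_ /eqP E1 /eqP F1] /and3P [_ /eqP E2 /eqP F2].
- by rewrite -E1 -E2.
- by move: F1; rewrite F2 => -[].
- by rewrite -E1 -E2.
Qed.

Lemma card_le1 (S : {set V}) : (forall u1 u2, u1 \in S -> u2 \in S -> u1 = u2) -> #|S| <= 1.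
Proof.
move=> H; case: (set_0Vmem S) => [->|[u Hu]]; first by rewrite cards0.
rewrite -[X in _ <= X](cards1 u); apply: subset_leq_card; apply/subsetP=> v Hv.
by rewrite inE (H _ _ Hv Hu).
Qed.

Lemma Rs_rcons (I : inst k) (h : hseq) qa :
  Rs I (rcons h qa) = Rs I h :|: [set u | revq I qa.1 u].
Proof. by apply/setP=> u; rewrite !inE has_rcons orbC. Qed.

Lemma Rs_sub (I : inst k) (h h' : hseq) : {subset h <= h'} -> Rs I h \subset Rs I h'.
Proof.
move=> H; apply/subsetP=> u; rewrite !inE => /hasP [qa Hqa Hr]; apply/hasP; exists qa => //.
exact: H.
Qed.

Lemma exp_rcons (I : inst k) (u : V) (h : hseq) qa :
  expensive I u h -> expensive I u (rcons h qa).
Proof.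
rewrite /expensive /cnt2 /cntL /cntR -!cats1 !count_cat.
case/or3P=> H; apply/or3P; [apply: Or31 | apply: Or32 | apply: Or33]; lia.
Qed.

Definition Ncheap (I : inst k) t := count (fun s => cheap A I s) (iota 0 t).
Definition Xexp (I : inst k) (h : hseq) := #|[set u | (u \in Rs I h) && expensive I u h]|.

Lemma ncheap_invariant (I : inst k) t :
  minn #|Rs I (hist A I t)| k <= Ncheap I t + Xexp I (hist A I t).
Proof.
elim: t => [|t IH].
  have -> : Rs I (hist A I 0) = set0 by apply/setP=> u; rewrite !inE.
  by rewrite cards0 min0n.
rewrite hist_S; set h := hist A I t in IH *; set q := A h.
rewrite Rs_rcons /=.
set Nw := [set u | revq I q u].
have HN : Ncheap I t.+1 = Ncheap I t + cheap A I t.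
  by rewrite /Ncheap -addn1 iotaD count_cat /= addn0.
set D := Nw :\: Rs I h.
set Ex := [set u | expensive I u h].
have HX : Xexp I h + #|D :&: Ex| <= Xexp I (rcons h (q, ans I q)).
  rewrite /Xexp; set X0 := [set u | (u \in Rs I h) && expensive I u h].
  have Hd : X0 :&: (D :&: Ex) = set0.
    by apply/setP=> u; rewrite !inE; case: has; rewrite ?andbF.
  have := cardsU X0 (D :&: Ex); rewrite Hd cards0 subn0 => <-.
  apply: subset_leq_card; apply/subsetP=> u.
  rewrite !inE has_rcons /= => /orP [/andP [Ha Hb]|/andP [/andP [_ Hn] He]].
    by rewrite Ha orbT exp_rcons.
  by rewrite Hn /= exp_rcons.
have Hmono : Xexp I h <= Xexp I (rcons h (q, ans I q)).
  exact: leq_trans (leq_addr _ _) HX.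
case: (leqP k #|Rs I h|) => Hk.
  have -> : minn #|Rs I h :|: Nw| k = k.
    apply/minn_idPr; apply: leq_trans Hk _; apply: subset_leq_card; exact: subsetUl.
  move: IH; rewrite (minn_idPr Hk) HN; lia.
rewrite (minn_idPl (ltnW Hk)) in IH.
have Hcheap : #|D :\: Ex| <= cheap A I t.
  case: (set_0Vmem (D :\: Ex)) => [->|[u Hu]].
    by rewrite cards0.
  have -> : cheap A I t.
    apply/existsP; exists u; move: Hu; rewrite !inE => /andP [He /andP [HR Hr]].
    by rewrite HR Hr Hk He.
  apply: card_le1 => u1 u2; rewrite !inE => /andP [_ /andP [_ H1]] /andP [_ /andP [_ H2]].
  exact: revq_uniq H1 H2.
apply: (leq_trans (geq_minl _ _)).
have E1 : #|Rs I h :|: Nw| <= #|Rs I h| + #|D|.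
  apply: leq_trans (cardsU_le _ _); apply: subset_leq_card; apply/subsetP=> u.
  by rewrite /D !inE; case: has.
have E2 : #|D| = #|D :&: Ex| + #|D :\: Ex| by rewrite cardsID.
rewrite HN; apply: (leq_trans E1); rewrite E2 addnA.
apply: (@leq_trans (Ncheap I t + Xexp I h + #|D :&: Ex| + cheap A I t)).
  by apply: leq_add => //; apply: leq_add.
rewrite -!addnA leq_add2l addnA (addnC (cheap A I t)) leq_add2r; exact: HX.
Qed.

End Final.



Section Main.
Variable k : nat.
Local Notation V := (vtx k).
Local Notation hseq := (seq (query k * answer k)).
Variable A : strategy k.

Lemma step_bound s :
  k * #|[pred I : inst k | valid I && cheap A I s]| <= 5 * #|[pred I : inst k | valid I]|.
Proof.
have Hsub : [set I | valid I && cheap A I s] \subset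
    ([set I | BA A s I] :|: [set I | BB A s I]) :|: [set I | BC A s I].
  apply/subsetP=> I; rewrite !inE => /andP [HV Hc]; rewrite /BA /BB /BC /= HV Hc /=.
  by case: (A (hist A I s)) => [[[[] _] _]|].
have HA := caseA A s; have HB := caseB A s; have HC := caseC A s.
have H1 : #|[set I | valid I && cheap A I s] | <= #|BA A s| + #|BB A s| + #|BC A s|.
  apply: (leq_trans (subset_leq_card Hsub)).
  apply: (leq_trans (cardsU_le _ _)); apply: leq_add; last by rewrite cardsE.
  apply: (leq_trans (cardsU_le _ _)); by rewrite !cardsE.
rewrite cardsE in H1.
have E2 : k <= 2 * (k - k %/ 2) by lia.
apply: (@leq_trans (k * (#|BA A s| + #|BB A s| + #|BC A s|))); first by rewrite leq_mul2l H1 orbT.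
rewrite !mulnDr.
have HA' : k * #|BA A s| <= #|[pred I : inst k | valid I]|.
  by apply: leq_trans HA; rewrite leq_mul2r leq_pmull ?orbT //; case: k HA => //.
have HB' : k * #|BB A s| <= 2 * #|[pred I : inst k | valid I]|.
  apply: (@leq_trans (2 * (k - k %/ 2) * #|BB A s|)); first by rewrite leq_mul2r E2 orbT.
  by rewrite -mulnA leq_mul2l HB orbT.
have HC' : k * #|BC A s| <= 2 * #|[pred I : inst k | valid I]|.
  apply: (@leq_trans (2 * (k - k %/ 2) * #|BC A s|)); first by rewrite leq_mul2r E2 orbT.
  by rewrite -mulnA leq_mul2l HC orbT.
lia.
Qed.

End Main.



Section Main2.
Variable k : nat.
Local Notation V := (vtx k).
Local Notation hseq := (seq (query k * answer k)).
Variable A : strategy k.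

Lemma Xexp_bound (I : inst k) (h : hseq) : valid I -> k * Xexp I h <= 6 * size h.
Proof.
move=> HV.
have Hsub : [set u | (u \in Rs I h) && expensive I u h] \subset
  ([set u | k <= cnt2 I u h] :|: [set u | k <= 2 * cntL u h]) :|: [set u | k <= 2 * cntR (imatch I u) h].
  by apply/subsetP=> u; rewrite !inE => /andP [_]; rewrite /expensive => /or3P [] ->; rewrite ?orbT.
have H1 : Xexp I h <= #|[pred u | k <= cnt2 I u h]| + #|[pred u | k <= 2 * cntL u h]|
                      + #|[pred u | k <= 2 * cntR (imatch I u) h]|.
  apply: (leq_trans (subset_leq_card Hsub)).
  apply: (leq_trans (cardsU_le _ _)); apply: leq_add; last by rewrite cardsE.
  apply: (leq_trans (cardsU_le _ _)); by rewrite !cardsE.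
have M1 := markov_card (fun u => cnt2 I u h) k.
have M2 := markov_card (fun u => 2 * cntL u h) k.
have M3 := markov_card (fun u => 2 * cntR (imatch I u) h) k.
have S1 := sum_cnt2 h HV.
have S2 := @sum_cntL k h.
have S3 := sum_cntR h HV.
have M2' : k * #|[pred u | k <= 2 * cntL u h]| <= 2 * (1 * size h).
  by apply: (leq_trans M2); rewrite -big_distrr /= leq_mul2l S2 orbT.
have M3' : k * #|[pred u | k <= 2 * cntR (imatch I u) h]| <= 2 * (1 * size h).
  by apply: (leq_trans M3); rewrite -big_distrr /= leq_mul2l S3 orbT.
clear M2 M3 S2 S3.
apply: (leq_trans (leq_mul (leqnn k) H1)); rewrite !mulnDr.
apply: (leq_trans (leq_add (leq_add (leq_trans M1 S1) M2') M3')); lia.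
Qed.

Lemma sum_Ncheap t :
  k * \sum_(I : inst k | valid I) Ncheap A I t <= t * (5 * #|[pred I : inst k | valid I]|).
Proof.
rewrite /Ncheap.
have -> : \sum_(I : inst k | valid I) count (fun s => cheap A I s) (iota 0 t) =
          \sum_(s <- iota 0 t) #|[pred I : inst k | valid I && cheap A I s]|.
  have -> : \sum_(I : inst k | valid I) count (fun s => cheap A I s) (iota 0 t) =
            \sum_(I : inst k | valid I) \sum_(s <- iota 0 t) (cheap A I s : nat).
    apply: eq_bigr => I _; elim: (iota 0 t) => [|x r IH]; first by rewrite big_nil.
    by rewrite big_cons /= IH.
  rewrite exchange_big /=; apply: eq_bigr => s _.
  rewrite -sum_bool_card big_mkcond /=; apply: eq_bigr => I _; by case: (valid I).
rewrite big_distrr /=.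
apply: (@leq_trans (\sum_(s <- iota 0 t) (5 * #|[pred I : inst k | valid I]|))).
  by apply: leq_sum => s _; apply: step_bound.
have -> : \sum_(s <- iota 0 t) (5 * #|[pred I : inst k | valid I]|) =
          \sum_(0 <= s < t) (5 * #|[pred I : inst k | valid I]|) by rewrite /index_iota subn0.
by rewrite sum_nat_const_nat subn0.
Qed.

End Main2.



Lemma ar1 k X t0 : k * X <= 6 * t0 -> 12 * t0 <= k * k -> 0 < k -> 2 * X <= k.
Proof. move=> H1 H2 Hk; rewrite -(leq_pmul2l Hk); nia. Qed.
Lemma ar2 k q : 20 * q <= k -> 20 * (k * q) <= k * k.
Proof. move=> H; nia. Qed.
Lemma ar3 k B S t0 V : k * B <= 2 * S -> k * S <= t0 * (5 * V) -> 20 * t0 <= k * k -> 0 < k -> 2 * B <= V.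
Proof. move=> H1 H2 H3 Hk.
have Hkk : 0 < k * k by rewrite muln_gt0 Hk.
rewrite -(leq_pmul2l Hkk).
have E1 : k * k * (2 * B) = 2 * (k * (k * B)) by lia.
rewrite E1.
have H4 : k * (k * B) <= k * (2 * S) by rewrite leq_mul2l H1 orbT.
have H5 : k * (2 * S) <= 2 * (t0 * (5 * V)) by rewrite mulnCA leq_mul2l H2 orbT.
have H6 : 2 * (2 * (t0 * (5 * V))) = 20 * t0 * V by lia.
have H7 : 20 * t0 * V <= k * k * V by rewrite leq_mul2r H3 orbT.
apply: (leq_trans (leq_mul (leqnn 2) (leq_trans H4 H5))); by rewrite H6.
Qed.
Lemma ar4 k q G V : 20 * q <= k -> k < 20 * q + 20 -> 0 < q -> V <= 2 * G ->
  (6 * k) * (6 * k) * V <= 3000 * (k * q * G).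
Proof.
move=> H1 H2 Hq HV.
have Hk : k <= 40 * q by lia.
apply: (@leq_trans ((6 * k) * (6 * k) * (2 * G))); first by rewrite leq_mul2l HV orbT.
apply: (@leq_trans (72 * k * (40 * q) * G)).
  have -> : 6 * k * (6 * k) * (2 * G) = 72 * k * k * G by lia.
  by rewrite leq_mul2r leq_mul2l Hk !orbT.
have -> : 72 * k * (40 * q) * G = 2880 * (k * q * G) by lia.
by rewrite leq_mul2r orbT.
Qed.

Section Main3.
Variable k : nat.
Variable A : strategy k.

Lemma bad_lemma (I : inst k) t0 t : valid I -> 12 * t0 <= k * k -> t < t0 ->
  2 * k <= ndisc (hist A I t) -> k <= 2 * Ncheap A I t0.
Proof.
move=> HV Ht0 Ht Hn.
have Hs : size (hist A I t) <= k * k by rewrite size_hist; lia.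
have H1 := disc_rev HV (consistent_hist A I t) Hs Hn.
have H2 : #|Rs I (hist A I t)| <= #|Rs I (hist A I t0)|.
  by apply: subset_leq_card; apply: Rs_sub; apply: hist_sub; apply: ltnW.
have Hinv := ncheap_invariant A I t0.
rewrite (minn_idPr (leq_trans H1 H2)) in Hinv.
have HX := Xexp_bound (hist A I t0) HV; rewrite size_hist in HX.
have H3 : 2 * Xexp I (hist A I t0) <= k.
  have [Hk0|Hk0] := posnP k; first lia.
  exact: ar1 HX Ht0 Hk0.
lia.
Qed.

End Main3.

Theorem mainTheorem12 :
  exists d : nat, 0 < d /\
  exists k0 : nat, forall k : nat, k0 <= k ->
  forall A : strategy k, exists T : nat,
    (6 * k) ^ 2 * #|[pred I : inst k | valid I]|
      <= d * \sum_(I : inst k | valid I) costT A I T.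
Proof.
exists 3000; split => //; exists 20 => k Hk A.
set q := k %/ 20; set t0 := k * q.
have Hq1 : 20 * q <= k by rewrite /q; lia.
have Hq2 : k < 20 * q + 20 by rewrite /q; lia.
have Hq0 : 0 < q by lia.
have H20 : 20 * t0 <= k * k by apply: ar2.
have H12 : 12 * t0 <= k * k by lia.
exists t0.
set Vn := #|[pred I : inst k | valid I]|.
pose fN (I : inst k) := if valid I then 2 * Ncheap A I t0 else 0.
pose fC (I : inst k) := if valid I then costT A I t0 else 0.
set B := [pred I : inst k | k <= fN I].
set G := [pred I : inst k | t0 <= fC I].
have HB : k * #|B| <= 2 * \sum_(I : inst k | valid I) Ncheap A I t0.
  apply: leq_trans (markov_card fN k) _.
  rewrite big_distrr /= [X in _ <= X]big_mkcond /=; apply: leq_sum => I _.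
  by rewrite /fN; case: (valid I).
have HS := sum_Ncheap A t0.
have HB2 : 2 * #|B| <= Vn.
  apply: (ar3 HB HS H20); lia.
have HV : Vn <= #|B| + #|G|.
  rewrite /Vn -(cardsE [pred I : inst k | valid I]) -(cardsE B) -(cardsE G).
  apply: leq_trans (cardsU_le _ _); apply: subset_leq_card; apply/subsetP=> I.
  rewrite !inE /B /G /fN /fC /= => HVI; rewrite HVI.
  case: (leqP k (2 * Ncheap A I t0)) => //= HN.
  rewrite /costT hasNfind ?size_iota //.
  apply/hasPn=> t; rewrite mem_iota => /andP [_ Ht]; apply/negP => Hn.
  have := bad_lemma HVI H12 Ht Hn; rewrite leqNgt HN //.
have HG : t0 * #|G| <= \sum_(I : inst k | valid I) costT A I t0.
  apply: leq_trans (markov_card fC t0) _.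
  rewrite [X in _ <= X]big_mkcond /=; apply: leq_sum => I _.
  by rewrite /fC; case: (valid I).
rewrite -mulnn.
apply: (@leq_trans (3000 * (t0 * #|G|))); last by rewrite leq_mul2l HG orbT.
have HVG : Vn <= 2 * #|G| by lia.
exact: ar4.
Qed.
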